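(* Let $G$ be a connected graph with a fixed vertex $v_1$. Take a new vertex $z\notin V(G)$ and join it by a single edge to a vertex $u \in V(G)$ with $u \neq v_1$; denote the resulting graph by $G^+$. Then $\delta_{G^+}(z) = \delta_{G^+}(u)+1 = \delta_G(u)+1$.
   Context: All graphs are finite, simple, undirected. For a graph $H$ and vertex $x$, the transmission is $t_H(x)=\sum_{y\in V(H)}\mathrm{dist}_H(x,y)$. For a graph $H$ containing the fixed vertex $v_1$ and a vertex $x\neq v_1$ of $H$, define $\delta_H(x) = t_H(x) - t_{H-v_1}(x)$, where $H-v_1$ denotes $H$ with $v_1$ and its incident edges deleted. *)

(* Defs.v *)
From mathcomp Require Import all_boot all_order all_algebra.
Set Implicit Arguments. Unset Strict Implicit. Unset Printing Implicit Defensive.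

(* A (simple, undirected) graph is represented inside an ambient finite type T
   by a vertex set V : {set T} and a symmetric irreflexive relation e : rel T;
   its edges are the pairs x y with x, y in V and e x y. *)

Section Graphs.
Variable T : finType.

Definition grow (V : {set T}) (e : rel T) (A : {set T}) : {set T} :=
  A :|: [set y in V | [exists x in A, e x y]].

Fixpoint ball (V : {set T}) (e : rel T) (x : T) (n : nat) : {set T} :=
  match n with
  | 0 => V :&: [set x]
  | n'.+1 => grow V e (ball V e x n')
  end.

Definition connected (V : {set T}) (e : rel T) : Prop :=
  forall x y, x \in V -> y \in V -> exists n, y \in ball V e x n.

(* graph distance: least n with y within n steps of x
   (a walk between vertices of V can be shortened to length < #|T|;
    the value for unreachable y is irrelevant for connected graphs) *)
Definition dist (V : {set T}) (e : rel T) (x y : T) : nat :=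
  find (fun n => y \in ball V e x n) (iota 0 #|T|.+1).

Definition transmission (V : {set T}) (e : rel T) (x : T) : nat :=
  \sum_(y in V) dist V e x y.

Definition delta (V : {set T}) (e : rel T) (v1 x : T) : int :=
  (transmission V e x)%:Z - (transmission (V :\ v1) e x)%:Z.

Definition pendant_edge (V : {set T}) (e : rel T) (z u : T) : rel T :=
  fun x y => [&& e x y, x \in V & y \in V]
             || ((x == z) && (y == u)) || ((x == u) && (y == z)).

End Graphs.

(* Main.v *)
Require Import Defs.
From mathcomp Require Import all_boot all_order all_algebra zify.
From mathcomp Require Import zify.

Section S.
Variable T : finType.
Implicit Types (W A : {set T}) (f : rel T).

Lemma ball_sub W f x n : ball W f x n \subset W.
Proof.
elim: n => [|n IH] /=; first exact: subsetIl.
rewrite /grow subUset IH /=; apply/subsetP=> y; rewrite inE => /andP[] //.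
Qed.

Lemma ball_step W f x n : ball W f x n \subset ball W f x n.+1.
Proof. by rewrite /= /grow subsetUl. Qed.

Lemma ball_mono W f x m n : m <= n -> ball W f x m \subset ball W f x n.
Proof.
move=> /subnK <-; elim: (n - m) => [|k IH] //=.
exact: subset_trans IH (ball_step _ _ _ _).
Qed.

Lemma ball_center W f x n : x \in W -> x \in ball W f x n.
Proof.
move=> xW; have := subsetP (@ball_mono W f x 0 n (leq0n n)); apply.
by rewrite /= !inE xW eqxx.
Qed.

Lemma ball_stab W f x k : ball W f x k.+1 = ball W f x k ->
  forall m, ball W f x (m + k) = ball W f x k.
Proof.
move=> Hk; elim=> [|m IH] //.
by rewrite addSn /= IH; exact: Hk.
Qed.

Lemma ball_growth W f x k : x \in W ->
  k < #|ball W f x k| \/ exists2 j, j < k & ball W f x j.+1 = ball W f x j.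
Proof.
move=> xW; elim: k => [|k [IH|[j jk Hj]]].
- left; rewrite card_gt0; apply/set0Pn; exists x; exact: ball_center.
- have [E|NE] := eqVneq (ball W f x k.+1) (ball W f x k).
    by right; exists k.
  left; apply: leq_ltn_trans IH _; apply: proper_card.
  by rewrite properEneq eq_sym NE ball_step.
- by right; exists j => //; apply: ltnW.
Qed.

Lemma ball_bound W f x y : x \in W -> (exists n, y \in ball W f x n) ->
  exists2 j, j < #|W| & y \in ball W f x j.
Proof.
move=> xW [n yn].
have [H|[j jW Hj]] := @ball_growth W f x #|W| xW.
  by move: H; rewrite ltnNge subset_leq_card // ball_sub.
exists j => //.
have [nj|jn] := leqP n j.
  move: yn; apply/subsetP; exact: ball_mono.
by rewrite -(@ball_stab W f x j Hj (n - j)) subnK // ltnW.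
Qed.

Lemma ballS W f x n : ball W f x n.+1 = grow W f (ball W f x n).
Proof. by []. Qed.

Section Pend.
Variables (W : {set T}) (f g : rel T) (u z : T).
Hypothesis zW : z \notin W.
Hypothesis uW : u \in W.
Hypothesis hgW : forall x y, x \in W -> y \in W -> g x y = f x y.
Hypothesis hgz : forall y, y \in W -> g z y = (y == u).
Hypothesis hgz' : forall x, x \in W -> g x z = (x == u).

Lemma zu : (z == u) = false.
Proof. by apply/eqP=> E; move: zW; rewrite E uW. Qed.

Lemma grow_eq A y : A \subset W -> y \in W ->
  (y \in grow (z |: W) g A) = (y \in grow W f A).
Proof.
move=> AW yW; rewrite /grow !inE yW orbT /=; congr (_ || _).
apply/existsP/existsP => [[x /andP[xA gxy]]|[x /andP[xA fxy]]]; exists x;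
  rewrite xA /=; have xW := subsetP AW x xA; by rewrite ?hgW // -?hgW.
Qed.

Lemma grow_H A y : A \subset W -> u \in A -> y != z -> y \in W ->
  (y \in grow (z |: W) g (z |: A)) = (y \in grow W f A).
Proof.
move=> AW uA yz yW; rewrite /grow !inE yW orbT (negbTE yz) /=.
apply/orP/orP => [[yA|/existsP[x /andP[xA gxy]]]|[yA|/existsP[x /andP[xA fxy]]]].
- by left.
- move: xA; rewrite !inE => /orP[/eqP xz|xA].
    by move: gxy; rewrite xz hgz // => /eqP ->; left.
  by right; apply/existsP; exists x; rewrite xA -hgW // (subsetP AW).
- by left.
- by right; apply/existsP; exists x; rewrite !inE xA orbT hgW // (subsetP AW).
Qed.

Lemma grow_out A y : A \subset W -> y != z -> y \notin W ->
  (y \in grow (z |: W) g A) = false /\ (y \in grow W f A) = false.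
Proof.
move=> AW yz yW; rewrite /grow !inE (negbTE yz) (negbTE yW) /= ?andbF ?orbF.
suff -> : (y \in A) = false by [].
by apply/negbTE/negP => /(subsetP AW); rewrite (negbTE yW).
Qed.

Lemma grow_z A : u \in A -> z \in grow (z |: W) g A.
Proof.
move=> uA; rewrite /grow !inE eqxx /=; apply/orP; right.
by apply/existsP; exists u; rewrite uA hgz' ?eqxx.
Qed.

Lemma ballHu n : ball (z |: W) g u n
   = ball W f u n :|: (if n is 0 then set0 else [set z]).
Proof.
elim: n => [|n IH].
  by apply/setP=> y; rewrite /= !inE orbF; case: (eqVneq y u) => [->|_]; rewrite ?andbF // !andbT uW orbT.
apply/setP=> y; rewrite (ballS (z |: W)) IH.
have [->|yz] := eqVneq y z.
  rewrite in_setU in_set1 eqxx orbT; apply: grow_z.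
  by rewrite in_setU ball_center.
have [yW|yW] := boolP (y \in W); last first.
  rewrite in_setU in_set1 (negbTE yz) orbF.
  have -> : (y \in ball W f u n.+1) = false.
    by apply/negbTE/negP => /(subsetP (ball_sub _ _ _ _)); rewrite (negbTE yW).
  apply/negbTE/negP; rewrite -IH -(ballS (z |: W)).
  move=> /(subsetP (ball_sub _ _ _ _)); by rewrite !inE (negbTE yW) (negbTE yz).
rewrite in_setU in_set1 (negbTE yz) orbF ballS.
case: n {IH} => [|n].
  rewrite setU0 grow_eq //; exact: ball_sub.
rewrite (setUC (ball W f u n.+1)) grow_H //; first exact: ball_sub.
exact: ball_center.
Qed.

Lemma ballHz n : ball (z |: W) g z n
   = if n is n'.+1 then z |: ball W f u n' else [set z].
Proof.
elim: n => [|n IH].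
  by apply/setP=> y; rewrite /= !inE; case: eqP => [->|]; rewrite ?andbF ?eqxx.
apply/setP=> y; rewrite (ballS (z |: W)) IH.
have [->|yz] := eqVneq y z.
  rewrite in_setU in_set1 eqxx /=; apply: (subsetP (subsetUl _ _)).
  by case: n {IH} => [|n]; rewrite ?setU11 ?set11.
have [yW|yW] := boolP (y \in W); last first.
  rewrite in_setU in_set1 (negbTE yz) /=.
  have -> : (y \in ball W f u n) = false.
    by apply/negbTE/negP => /(subsetP (ball_sub _ _ _ _)); rewrite (negbTE yW).
  apply/negbTE/negP; rewrite -IH -(ballS (z |: W)).
  move=> /(subsetP (ball_sub _ _ _ _)); by rewrite !inE (negbTE yW) (negbTE yz).
rewrite in_setU in_set1 (negbTE yz) /=.
case: n {IH} => [|n].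
  rewrite /grow !inE (negbTE yz) yW /=.
  apply/existsP/idP => [[x /andP[]]|/eqP ->]; last by exists z; rewrite !inE eqxx hgz ?eqxx.
  by rewrite inE => /eqP ->; rewrite hgz.
rewrite grow_H //; first exact: ball_sub.
exact: ball_center.
Qed.

Hypothesis conn : forall y, y \in W -> exists n, y \in ball W f u n.

Lemma find_cons' (a : pred nat) x s : find a (x :: s) = if a x then 0 else (find a s).+1.
Proof. by []. Qed.

Lemma iota_split N : iota 0 N.+1 = 0 :: [seq i.+1 | i <- iota 0 N].
Proof. by rewrite -[N.+1]/(1 + N) iotaD /= -(iotaDl 1 0). Qed.

Lemma distHu y : y \in W -> dist (z |: W) g u y = dist W f u y.
Proof.
move=> yW; rewrite /dist; apply: eq_find => n /=.
rewrite ballHu in_setU; case: n => [|n]; rewrite ?in_set0 ?in_set1 ?orbF //.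
have -> : (y == z) = false; last by rewrite orbF.
by apply/eqP=> E; move: zW; rewrite -E yW.
Qed.

Lemma distHuz : dist (z |: W) g u z = 1.
Proof.
have : 0 < #|T| by apply/card_gt0P; exists z.
rewrite /dist; case: #|T| => // N _; rewrite iota_split find_cons' find_map; cbv beta.
rewrite ballHu in_setU in_set0 orbF.
have -> : (z \in ball W f u 0) = false.
  by apply/negbTE/negP => /(subsetP (ball_sub _ _ _ _)); rewrite (negbTE zW).
rewrite iota_split find_cons' ifT //; change (z \in ball (z |: W) g u 1).
by rewrite ballHu in_setU in_set1 eqxx orbT.
Qed.

Lemma distHzz : dist (z |: W) g z z = 0.
Proof. by rewrite /dist iota_split find_cons'; cbv beta; rewrite ballHz in_set1 eqxx. Qed.

Lemma distHz y : y \in W -> dist (z |: W) g z y = (dist W f u y).+1.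
Proof.
move=> yW; have yz : (y == z) = false.
  by apply/eqP=> E; move: zW; rewrite -E yW.
rewrite /dist iota_split find_cons'; cbv beta; rewrite ballHz in_set1 yz find_map.
have -> : find (preim succn (fun n => y \in ball (z |: W) g z n)) (iota 0 #|T|)
   = find (fun n => y \in ball W f u n) (iota 0 #|T|).
  apply: eq_find => n; change ((y \in ball (z |: W) g z n.+1) = (y \in ball W f u n)).
  by rewrite ballHz in_setU in_set1 yz.
congr _.+1.
rewrite -iota_split -addn1 iotaD find_cat.
have [j jW jb] := @ball_bound W f u y uW (conn y yW).
have -> // : has (fun n => y \in ball W f u n) (iota 0 #|T|).
apply/hasP; exists j => //; rewrite mem_iota /= add0n.
apply: leq_trans jW _; rewrite -cardsT; apply: subset_leq_card; exact: subsetT.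
Qed.

Lemma transHz : transmission (z |: W) g z = transmission W f u + #|W|.
Proof.
rewrite /transmission big_setU1 //= distHzz add0n.
rewrite (eq_bigr (fun y => dist W f u y + 1)); last by move=> y yW; rewrite distHz // addn1.
by rewrite big_split /= sum1_card.
Qed.

Lemma transHu : transmission (z |: W) g u = transmission W f u + 1.
Proof.
rewrite /transmission big_setU1 //= distHuz addnC.
by congr (_ + _); apply: eq_bigr => y yW; rewrite distHu.
Qed.

End Pend.
End S.

Local Open Scope ring_scope.

Theorem lemma1 (T : finType) (V : {set T}) (e : rel T) (v1 u z : T) :
  symmetric e -> irreflexive e ->
  connected V e -> v1 \in V ->
  connected (V :\ v1) e ->
  u \in V -> u != v1 -> z \notin V ->
  delta (z |: V) (pendant_edge V e z u) v1 z
    = delta (z |: V) (pendant_edge V e z u) v1 u + 1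
  /\ delta (z |: V) (pendant_edge V e z u) v1 u + 1 = delta V e v1 u + 1.
Proof.
move=> _ _ cV v1V cVm uV uv1 zV.
set P := pendant_edge V e z u.
have zu : (z == u) = false by apply/eqP=> E; move: zV; rewrite E uV.
have gen : forall W : {set T}, W \subset V ->
   [/\ forall x y, x \in W -> y \in W -> P x y = e x y,
       forall y, y \in W -> P z y = (y == u) &
       forall x, x \in W -> P x z = (x == u)].
  move=> W WV; split.
  - move=> x y xW yW; rewrite /P /pendant_edge (subsetP WV x xW) (subsetP WV y yW) !andbT.
    have -> : (x == z) = false by apply/eqP=> E; move: zV; rewrite -E (subsetP WV x xW).
    have -> : (y == z) = false by apply/eqP=> E; move: zV; rewrite -E (subsetP WV y yW).
    by rewrite andbF !orbF.
  - move=> y yW; rewrite /P /pendant_edge (negbTE zV) eqxx zu /= andbF orbF.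
    by [].
  - move=> x xW; rewrite /P /pendant_edge (negbTE zV) eqxx zu /= !andbF /= andbT.
    by [].
have [h1 h2 h3] := gen V (subxx V).
have [k1 k2 k3] := gen (V :\ v1) (subD1set V v1).
have uVm : u \in V :\ v1 by rewrite !inE uv1.
have zVm : z \notin V :\ v1 by rewrite !inE (negbTE zV) andbF.
have c1 : forall y, y \in V -> exists n, y \in ball V e u n by move=> y yV; exact: cV.
have c2 : forall y, y \in V :\ v1 -> exists n, y \in ball (V :\ v1) e u n
  by move=> y yV; exact: cVm.
have Em : (z |: V) :\ v1 = z |: (V :\ v1).
  apply/setP=> x; rewrite !inE; case: (eqVneq x z) => [->|] //=.
  by have -> : (z == v1) = false by apply/eqP=> E; move: zV; rewrite E v1V.
rewrite /delta Em.
rewrite (@transHz T V e P u z zV uV h1 h2 c1) (@transHu T V e P u z zV uV h1 h2 h3).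
rewrite (@transHz T _ e P u z zVm uVm k1 k2 c2) (@transHu T _ e P u z zVm uVm k1 k2 k3).
have := cardsD1 v1 V; rewrite v1V.
move: (transmission V e u) (transmission (V :\ v1) e u) #|V| #|V :\ v1| => a b c d Hc.
split; lia.
Qed.
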